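(* For integers $j\ge 1$ let $$I_j=\left[\binom{j+1}{2}^{-1},\binom{j}{2}^{-1}\right)$$ (with the convention $\binom{1}{2}^{-1}=\infty$), and for $\rho>0$ let $\alpha_j(\rho)=1/j+\rho(j-1)/2$ and $\beta_j(\rho)=1/j+\rho(j+1)/2$. Assume $\rho\in I_{j+1}$ for some $j\ge 1$, and let $\rho'=\rho/[1-\alpha_{j+1}(\rho)]$. Then (1) $\rho<\alpha_{j+1}(\rho)$; (2) $\rho'\in I_j$; (3) $\beta_j(\rho')=[1/\alpha_{j+1}(\rho)-1]^{-1}$; (4) $\alpha_{j+1}(\rho)+\rho=\beta_{j+1}(\rho)$. *)

(* Defs.v *)
From mathcomp Require Import all_boot all_order all_algebra.
Set Implicit Arguments. Unset Strict Implicit. Unset Printing Implicit Defensive.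
Import Order.TTheory GRing.Theory Num.Theory.
Local Open Scope ring_scope.

(* I_j = [ C(j+1,2)^{-1}, C(j,2)^{-1} ), with C(1,2)^{-1} = +infinity. *)
Definition in_I (R : realFieldType) (j : nat) (rho : R) : Prop :=
  ('C(j.+1, 2)%:R)^-1 <= rho /\ (j = 1%N \/ rho < ('C(j, 2)%:R)^-1).

Definition alpha (R : realFieldType) (j : nat) (rho : R) : R :=
  (j%:R)^-1 + rho * (j%:R - 1) / 2.

Definition beta (R : realFieldType) (j : nat) (rho : R) : R :=
  (j%:R)^-1 + rho * (j%:R + 1) / 2.

(* Main.v *)
Require Import Defs.
From mathcomp Require Import all_boot all_order all_algebra.
From mathcomp Require Import ring lra zify.
Import Order.TTheory GRing.Theory Num.Theory.
Local Open Scope ring_scope.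

Lemma bin2R (R : realFieldType) (n : nat) : ('C(n.+1, 2)%:R : R) = n.+1%:R * n%:R / 2.
Proof.
have H : (2 * 'C(n.+1, 2) = n.+1 * n)%N.
  elim: n => [|n IH]; first by [].
  rewrite binS bin1 mulnDr IH; lia.
have -> : ('C(n.+1, 2)%:R : R) = (2 * 'C(n.+1, 2))%N%:R / 2.
  by rewrite natrM mulrC mulrA mulVf ?mul1r // pnatr_eq0.
by rewrite H natrM.
Qed.

Lemma bin2R' (R : realFieldType) (n : nat) : ('C(n, 2)%:R : R) = n%:R * (n%:R - 1) / 2.
Proof.
case: n => [|n]; first by rewrite mul0r mul0r.
by rewrite bin2R -natr1 addrK.
Qed.

Theorem lemma2 (R : realFieldType) (j : nat) (rho : R) :
  (1 <= j)%N -> 0 < rho -> in_I j.+1 rho ->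
  let rho' := rho / (1 - alpha j.+1 rho) in
  [/\ rho < alpha j.+1 rho,
      in_I j rho',
      beta j rho' = ((alpha j.+1 rho)^-1 - 1)^-1
    & alpha j.+1 rho + rho = beta j.+1 rho].
Proof.
move=> j1 rp [Hl Hu] rho'.
case: Hu => [[E]|Hu]; first by rewrite E in j1.
rewrite !bin2R in Hl Hu.
have m1 : (1 : R) <= j%:R by rewrite ler1n.
set m := (j%:R : R) in m1 Hl Hu *.
have Sm : (j.+1%:R : R) = m + 1 by rewrite -natr1.
have Sm2 : (j.+2%:R : R) = m + 2 by rewrite -!natr1 /m; lra.
rewrite Sm2 Sm in Hl; rewrite Sm in Hu.
have mp : 0 < m by lra.
have L1 : 2 <= rho * ((m+2)*(m+1)).
  rewrite invf_div ler_pdivrMr ?mulr_gt0 // in Hl; lra.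
have L2 : rho * ((m+1)* m) < 2.
  rewrite invf_div ltr_pdivlMr ?mulr_gt0 // in Hu; lra.
have L3 : rho * (m+1) < 2 by nra.
set D := 2 - rho * (m+1).
have Dp : 0 < D by rewrite /D; lra.
have m1p : 0 < m + 1 by lra.
have Ha : alpha j.+1 rho = (m+1)^-1 + rho * m / 2.
  rewrite /alpha Sm; congr (_ + _ * _ / _); lra.
have Hb : 1 - alpha j.+1 rho = m * D / (2 * (m+1)).
  rewrite Ha /D; field; lra.
have Hap : 0 < 1 - alpha j.+1 rho by rewrite Hb; apply: divr_gt0; nra.
have alp : 0 < alpha j.+1 rho.
  rewrite Ha; apply: addr_gt0; [by rewrite invr_gt0| apply: divr_gt0; nra].
have Hr : rho' = 2 * (m+1) * rho / (m * D).
  rewrite /rho' Hb; field; rewrite /D; lra.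
split.
- rewrite -subr_gt0.
  have -> : alpha j.+1 rho - rho = (2 - rho*(2-m)*(m+1))/(2*(m+1)).
    rewrite Ha; field; lra.
  apply: divr_gt0; nra.
- split.
  + rewrite bin2R Sm -subr_ge0 Hr.
    have -> : 2 * (m + 1) * rho / (m * D) - ((m + 1) * m / 2)^-1
       = 2 * (rho * ((m+2)*(m+1)) - 2) / (m * (m+1) * D).
      rewrite /D; field; rewrite /D; lra.
    apply: divr_ge0; nra.
  + case: (eqVneq j 1%N) => [->|jn1]; first by left.
    have m2 : 2 <= m by rewrite /m ler_nat; lia.
    right; rewrite bin2R' -/m -subr_gt0 Hr.
    have -> : ((m * (m - 1) / 2)^-1 - 2 * (m + 1) * rho / (m * D))
       = 2 * (2 - rho * ((m+1) * m)) / (m * (m-1) * D).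
      rewrite /D; field; rewrite /D; lra.
    apply: divr_gt0; [lra | apply: mulr_gt0 => //; nra].
- rewrite /beta Hr.
  have -> : (alpha j.+1 rho)^-1 - 1 = (1 - alpha j.+1 rho) / alpha j.+1 rho.
    by field; lra.
  rewrite invf_div Hb Ha /D -/m; field.
  by rewrite -/m -/D !gt_eqF.
- rewrite Ha /beta Sm; field; lra.
Qed.
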